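(* Let $\lambda>0$ and let $(u_n)\subset E_\lambda$ satisfy $\Psi_\lambda(u_n)=c_\lambda+o_n(1)$ and $$\|v\|_\lambda-\|u_n\|_\lambda\ge\int_{\mathbb{R}^N}f(u_n)(v-u_n)\,dx-\tau_n\|v-u_n\|_\lambda\quad\text{for all } v\in E_\lambda,$$ where $\tau_n\to0$. Then $(u_n)$ is bounded in $E_\lambda$.
   Context: $N\ge2$, $1^*=N/(N-1)$. $f$ satisfies: $(f_1)$ $f\in C(\mathbb{R})$; $(f_2)$ $f(s)=o(1)$ as $s\to0$; $(f_3)$ $|f(s)|\le c_1+c_2|s|^{p-1}$ for some $c_1,c_2>0$, $p\in(1,1^* )$; $(f_4)$ there is $\theta>1$ with $0<\theta F(s)\le f(s)s$ for $s\ne0$, $F(s)=\int_0^sf$; $(f_5)$ $f$ increasing. $V:\mathbb{R}^N\to\mathbb{R}$ satisfies $V\ge0$, $|\{V\le M_0\}|<\infty$ for some $M_0>0$, and $\Omega=\mathrm{int}(V^{-1}(\{0\}))\ne\emptyset$. $E_\lambda=\{u\in BV(\mathbb{R}^N):\int(1+\lambda V)|u|<\infty\}$, $\|u\|_\lambda=\int_{\mathbb{R}^N}|Du|+\int_{\mathbb{R}^N}(1+\lambda V(x))|u|\,dx$, $\Psi_\lambda(u)=\|u\|_\lambda-\int_{\mathbb{R}^N}F(u)\,dx$. $c_\lambda=\inf_{\gamma\in\Gamma_\lambda}\max_{t\in[0,1]}\Psi_\lambda(\gamma(t))$, $\Gamma_\lambda=\{\gamma\in C([0,1],E_\lambda):\gamma(0)=0,\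 \Psi_\lambda(\gamma(1))<0\}$. *)

(* Defs.v *)
From HB Require Import structures.
From mathcomp Require Import all_boot all_order all_algebra.
From mathcomp Require Import all_classical all_reals all_analysis.
Set Implicit Arguments. Unset Strict Implicit. Unset Printing Implicit Defensive.
Import Order.TTheory GRing.Theory Num.Theory.
Import numFieldNormedType.Exports.
Local Open Scope classical_set_scope.
Local Open Scope ring_scope.

Section defs.
Context {R : realType} (N : nat).

(* Points of R^N: rows 'rV[R]_N carry the normed/topological structure,
   N.-tuple R carries the (Borel) product sigma-algebra; rowt links them. *)
Definition rowt (x : N.-tuple R) : 'rV[R]_N := \row_i tnth x i.

Definition ebasis (i : 'I_N) : 'rV[R]_N := delta_mx 0 i.

Definition euclid (v : 'I_N -> R) : R := Num.sqrt (\sum_i v i ^+ 2).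

Definition is_lebesgue_RN (mu : {measure set (N.-tuple R) -> \bar R}) : Prop :=
  forall a b : N.-tuple R,
    mu [set x | forall i, tnth a i < tnth x i <= tnth b i] =
    (\prod_i Num.max 0 (tnth b i - tnth a i))%:E.

Definition C1c_field (phi : 'I_N -> 'rV[R]_N -> R) : Prop :=
  forall i, continuous (phi i) /\
    (forall j x, derivable (phi i) x (ebasis j)) /\
    (forall j, continuous (fun x => 'D_(ebasis j) (phi i) x)) /\
    compact (closure [set x | phi i x != 0]).

Definition divg (phi : 'I_N -> 'rV[R]_N -> R) (x : 'rV[R]_N) : R :=
  \sum_i 'D_(ebasis i) (phi i) x.

Variable mu : {measure set (N.-tuple R) -> \bar R}.

Definition TV (u : 'rV[R]_N -> R) : \bar R :=
  ereal_sup [set (\int[mu]_x ((u (rowt x) * divg phi (rowt x))%:E))%E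
            | phi in [set phi | C1c_field phi /\
                                forall x, euclid (fun i => phi i x) <= 1]].

Variables (V : 'rV[R]_N -> R) (lam : R).

Definition wL1 (u : 'rV[R]_N -> R) : \bar R :=
  (\int[mu]_x (((1 + lam * V (rowt x)) * `|u (rowt x)|)%:E))%E.

Definition in_E (u : 'rV[R]_N -> R) : Prop :=
  mu.-integrable setT (fun x => (u (rowt x))%:E) /\
  (TV u < +oo)%E /\ (wL1 u < +oo)%E.

Definition normE (u : 'rV[R]_N -> R) : R := fine (TV u + wL1 u)%E.

End defs.

Definition Fprim {R : realType} (f : R -> R) (s : R) : R :=
  if 0 <= s then Rintegral lebesgue_measure `[0, s]%classic f
  else - Rintegral lebesgue_measure `[s, 0]%classic f.

Section defs2.
Context {R : realType} (N : nat) (mu : {measure set (N.-tuple R) -> \bar R})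
  (V : 'rV[R]_N -> R) (lam : R) (f : R -> R).

Definition Psi (u : 'rV[R]_N -> R) : R :=
  normE mu V lam u - Rintegral mu setT (fun x => Fprim f (u (rowt x))).

Definition Gamma_path (gamma : R -> 'rV[R]_N -> R) : Prop :=
  (forall t, 0 <= t <= 1 -> in_E mu V lam (gamma t)) /\
  (forall t0, 0 <= t0 <= 1 -> forall e, 0 < e -> exists2 d, 0 < d &
     forall t, 0 <= t <= 1 -> `|t - t0| < d ->
       normE mu V lam (gamma t - gamma t0) < e) /\
  gamma 0 = (fun _ => 0) /\ Psi (gamma 1) < 0.

Definition c_lam : \bar R :=
  ereal_inf [set ereal_sup [set (Psi (gamma t))%:E | t in [set t | 0 <= t <= 1]]
            | gamma in Gamma_path].

End defs2.

(* Main.v *)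
Require Import Defs.
From HB Require Import structures.
From mathcomp Require Import all_boot all_order all_algebra.
From mathcomp Require Import all_classical all_reals all_analysis.
Import Order.TTheory GRing.Theory Num.Theory.
Import numFieldNormedType.Exports.
Local Open Scope classical_set_scope.
Local Open Scope ring_scope.

Lemma muleB_pos {R : realType} (k : R) (y z : \bar R) : 0 < k ->
  (k%:E * (y - z) = k%:E * y - k%:E * z)%E.
Proof.
move=> k0.
have h1 : (k%:E * +oo = +oo)%E by rewrite gt0_muley ?lte_fin.
have h2 : (k%:E * -oo = -oo)%E by rewrite gt0_muleNy ?lte_fin.
case: y => [y| |]; case: z => [z| |] /=;
  rewrite ?h1 ?h2 -?EFinM -?EFinN -?EFinD ?h1 ?h2 ?mulrBr ?mulrN //=;
  rewrite ?addeNy ?addNye ?addye ?addey ?h1 ?h2 //.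
Qed.

Section aux.
Context {R : realType} (N : nat) (mu : {measure set (N.-tuple R) -> \bar R}).
Import HBNNSimple.
Local Open Scope ereal_scope.

Lemma nnint_scale_le (g : N.-tuple R -> R) (k : R) : (0 < k)%R -> (forall x, 0 <= g x)%R ->
  \int[mu]_x ((k * g x)%:E) <= k%:E * \int[mu]_x (g x)%:E.
Proof.
move=> k0 g0.
rewrite !ge0_integralTE //; last by move=> x; rewrite lee_fin mulr_ge0 // ltW.
apply: ge_ereal_sup => _ [h hle <-].
have ki0 : (0 <= k^-1)%R by rewrite invr_ge0 ltW.
pose h' := scale_nnsfun h ki0.
have e : sintegral mu h = (k%:E * sintegral mu h')%E.
  rewrite /h' /scale_nnsfun sintegralrM muleA -EFinM divff ?mul1e //.
  by rewrite gt_eqF.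
rewrite e lee_pmul2l //.
apply: ereal_sup_ubound; exists h' => // x /=.
rewrite lee_fin mulrC.
have := hle x; rewrite lee_fin => hx.
rewrite ler_pdivrMr // mulrC //.
Qed.

Lemma nnint_scale (g : N.-tuple R -> R) (k : R) : (0 < k)%R -> (forall x, 0 <= g x)%R ->
  \int[mu]_x ((k * g x)%:E) = k%:E * \int[mu]_x (g x)%:E.
Proof.
move=> k0 g0; apply/eqP; rewrite eq_le nnint_scale_le //=.
have ki0 : (0 < k^-1)%R by rewrite invr_gt0.
have kg0 : forall x, (0 <= k * g x)%R by move=> x; rewrite mulr_ge0 // ltW.
have := @nnint_scale_le (fun x => k * g x)%R k^-1 ki0 kg0.
under eq_integral do rewrite mulrA mulVf ?mul1r ?gt_eqF //.
move=> H.
rewrite -(@lee_pmul2l _ (k^-1)%:E) // muleA -EFinM mulVf ?gt_eqF // mul1e //.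
Qed.

Lemma int_scale (h : N.-tuple R -> R) (k : R) : (0 < k)%R ->
  \int[mu]_x ((k * h x)%:E) = k%:E * \int[mu]_x (h x)%:E.
Proof.
move=> k0.
rewrite integralE [in RHS]integralE muleB_pos //.
have ep : forall x, ((fun x => (k * h x)%:E) ^\+ x = (k * Num.max (h x) 0)%:E).
  by move=> x; rewrite funeposE /= -EFin_max maxr_pMr ?ltW // mulr0.
have en : forall x, ((fun x => (k * h x)%:E) ^\- x = (k * Num.max (- h x) 0)%:E).
  by move=> x; rewrite funenegE /= -EFin_max maxr_pMr ?ltW // mulr0 mulrN.
have ep' : forall x, ((fun x => (h x)%:E) ^\+ x = (Num.max (h x) 0)%:E).
  by move=> x; rewrite funeposE /= -EFin_max.
have en' : forall x, ((fun x => (h x)%:E) ^\- x = (Num.max (- h x) 0)%:E).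
  by move=> x; rewrite funenegE /= -EFin_max.
rewrite (eq_integral _ _ (fun x _ => ep x)) (eq_integral _ _ (fun x _ => en x)).
rewrite (eq_integral _ _ (fun x _ => ep' x)) (eq_integral _ _ (fun x _ => en' x)).
rewrite !nnint_scale // => x; by rewrite le_max lexx orbT.
Qed.


Lemma C1c0 : C1c_field (fun (_ : 'I_N) (_ : 'rV[R]_N) => 0%R : R).
Proof.
move=> i; split; first exact: cst_continuous.
split; first by move=> j x; exact: derivable_cst.
split.
  move=> j.
  have -> : (fun x => 'D_(ebasis j) (fun _ : 'rV[R]_N => 0%R : R) x) = cst 0%R.
    by apply/funext => x; exact: derive_cst.
  exact: cst_continuous.
have -> : [set x : 'rV[R]_N | (0%R:R) != 0%R] = set0.
  by apply/seteqP; split => x //=; rewrite eqxx.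
by rewrite closure0; exact: compact0.
Qed.

Lemma divg0 x : divg (fun (_ : 'I_N) (_ : 'rV[R]_N) => 0%R : R) x = 0%R.
Proof. by rewrite /divg big1 // => i _; exact: derive_cst. Qed.

Lemma euclid0 : (euclid (fun _ : 'I_N => 0%R : R) <= 1)%R.
Proof.
rewrite /euclid big1 ?sqrtr0 // => i _; by rewrite expr0n.
Qed.

Lemma TV_ge0 u : 0 <= TV mu u.
Proof.
apply: le_ereal_sup_tmp; exists 0 => //.
exists (fun (_ : 'I_N) (_ : 'rV[R]_N) => 0%R : R); first by split; [exact: C1c0|move=> x; exact: euclid0].
rewrite -(integral0 mu setT); apply: eq_integral => x _.
by rewrite divg0 mulr0.
Qed.

Lemma C1cN (phi : 'I_N -> 'rV[R]_N -> R) : C1c_field phi -> C1c_field (fun i x => - phi i x)%R.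
Proof.
move=> H i; have [c [d [dc k]]] := H i.
split; first by move=> x; exact: (cvgN (c x)).
split; first by move=> j x; exact: (derivableN (d j x)).
split.
  move=> j.
  have -> : (fun x => 'D_(ebasis j) (fun x => - phi i x)%R x) = (fun x => - 'D_(ebasis j) (phi i) x)%R.
    by apply/funext => x; exact: (deriveN (d j x)).
  move=> x; exact: (cvgN (dc j x)).
have -> : [set x : 'rV[R]_N | (- phi i x)%R != 0%R] = [set x | phi i x != 0%R].
  by apply/seteqP; split => x /=; rewrite oppr_eq0.
exact: k.
Qed.

Lemma divgN (phi : 'I_N -> 'rV[R]_N -> R) x : C1c_field phi -> divg (fun i x => - phi i x)%R x = (- divg phi x)%R.
Proof.
move=> H; rewrite /divg -sumrN; apply: eq_bigr => i _.
have [c [d _]] := H i.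
exact: (deriveN (d i x)).
Qed.

Lemma TV_oppW u w : (forall y, w y = - u y)%R -> TV mu w <= TV mu u.
Proof.
move=> hw; apply: ge_ereal_sup => _ [phi [Cphi Bphi] <-].
apply: ereal_sup_ubound; exists (fun i x => - phi i x)%R.
  split; first exact: C1cN.
  move=> x; have := Bphi x; congr (_ <= _)%R; rewrite /euclid; congr Num.sqrt.
  by apply: eq_bigr => i _; rewrite sqrrN.
apply: eq_integral => x _; by rewrite divgN // hw mulrN mulNr.
Qed.

Lemma TV_scaleW u w (k : R) : (0 < k)%R -> (forall y, w y = k * u y)%R ->
  TV mu w <= k%:E * TV mu u.
Proof.
move=> k0 hw; apply: ge_ereal_sup => _ [phi Pphi <-].
under eq_integral do rewrite hw -mulrA.
rewrite int_scale // lee_pmul2l //.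
by apply: ereal_sup_ubound; exists phi.
Qed.

End aux.

Section aux2.
Context {R : realType} (N : nat) (mu : {measure set (N.-tuple R) -> \bar R})
  (V : 'rV[R]_N -> R) (lam : R) (h1V : forall y, (0 <= 1 + lam * V y)%R).
Local Open Scope ereal_scope.

Lemma wL1_ge0 u : 0 <= wL1 mu V lam u.
Proof. by apply: integral_ge0 => x _; rewrite lee_fin mulr_ge0. Qed.

Lemma wL1_oppW u w : (forall y, w y = - u y)%R -> wL1 mu V lam w = wL1 mu V lam u.
Proof. by move=> hw; apply: eq_integral => x _; rewrite hw normrN. Qed.

Lemma wL1_scaleW u w (k : R) : (0 < k)%R -> (forall y, w y = k * u y)%R ->
  wL1 mu V lam w = k%:E * wL1 mu V lam u.
Proof.
move=> k0 hw; rewrite /wL1 -int_scale //.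
apply: eq_integral => x _; rewrite hw normrM gtr0_norm //.
by rewrite mulrCA.
Qed.

Lemma normE_E u : TV mu u < +oo -> wL1 mu V lam u < +oo ->
  (normE mu V lam u)%:E = TV mu u + wL1 mu V lam u.
Proof.
move=> h1 h2; rewrite /normE fineK //.
rewrite ge0_fin_numE; first exact: lte_add_pinfty.
by apply: adde_ge0; [exact: TV_ge0|exact: wL1_ge0].
Qed.

Lemma normE_ge0 u : (0 <= normE mu V lam u)%R.
Proof. by apply: fine_ge0; apply: adde_ge0; [exact: TV_ge0|exact: wL1_ge0]. Qed.

Lemma normE_oppW u w : TV mu u < +oo -> wL1 mu V lam u < +oo ->
  (forall y, w y = - u y)%R -> (normE mu V lam w <= normE mu V lam u)%R.
Proof.
move=> h1 h2 hw.
have t : TV mu w < +oo by apply: le_lt_trans h1; exact: TV_oppW.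
have e := @wL1_oppW u w hw.
rewrite -lee_fin !normE_E ?e //.
by rewrite leeD // TV_oppW.
Qed.

Lemma normE_scaleW u w (k : R) : (0 < k)%R -> TV mu u < +oo -> wL1 mu V lam u < +oo ->
  (forall y, w y = k * u y)%R -> (normE mu V lam w <= k * normE mu V lam u)%R.
Proof.
move=> k0 h1 h2 hw.
have t : TV mu w < +oo.
  apply: le_lt_trans (@TV_scaleW R N mu u w k k0 hw) _.
  by rewrite lte_mul_pinfty // lee_fin ltW.
have e := @wL1_scaleW u w k k0 hw.
have t2 : wL1 mu V lam w < +oo by rewrite e lte_mul_pinfty // lee_fin ltW.
rewrite -lee_fin EFinM !normE_E // e (ge0_muleDr _ (@TV_ge0 R N mu u) (wL1_ge0 u)).
apply: leeD => //; exact: (@TV_scaleW R N mu u w k k0 hw).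
Qed.

Lemma in_E_scaleW u w (k : R) : (0 < k)%R -> in_E mu V lam u ->
  (forall y, w y = k * u y)%R -> in_E mu V lam w.
Proof.
move=> k0 [hi [h1 h2]] hw; split.
  have -> : (fun x => (w (rowt x))%:E) = (fun x => k%:E * (u (rowt x))%:E).
    by apply/funext => x; rewrite hw EFinM.
  exact: integrableZl.
split.
  apply: le_lt_trans (@TV_scaleW R N mu u w k k0 hw) _.
  by rewrite lte_mul_pinfty // lee_fin ltW.
by rewrite (@wL1_scaleW u w k k0 hw) lte_mul_pinfty // lee_fin ltW.
Qed.

Lemma TV_zero : TV mu (fun _ : 'rV[R]_N => 0%R) <= 0.
Proof.
apply: ge_ereal_sup => _ [phi _ <-].
rewrite -(integral0 mu setT) le_eqVlt; apply/orP; left; apply/eqP.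
by apply: eq_integral => x _; rewrite mul0r.
Qed.

Lemma in_E0 : in_E mu V lam (fun _ : 'rV[R]_N => 0%R).
Proof.
split; first exact: integrable0.
split; first by apply: le_lt_trans TV_zero _.
rewrite /wL1 (eq_integral (cst 0)) ?integral0 // => x _.
by rewrite normr0 mulr0.
Qed.

Lemma normE0 : normE mu V lam (fun _ : 'rV[R]_N => 0%R) = 0%R.
Proof.
apply/eqP; rewrite eq_le normE_ge0 andbT.
have h : TV mu (fun _ : 'rV[R]_N => 0%R) = 0.
  by apply/eqP; rewrite eq_le TV_zero TV_ge0.
rewrite /normE h /wL1 (eq_integral (cst 0)) ?integral0 ?adde0 //= => x _.
by rewrite normr0 mulr0.
Qed.

End aux2.

Lemma nnint_le {R : realType} (N : nat) (mu : {measure set (N.-tuple R) -> \bar R})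
  (g1 g2 : N.-tuple R -> R) : (forall x, 0 <= g1 x)%R -> (forall x, g1 x <= g2 x)%R ->
  (\int[mu]_x (g1 x)%:E <= \int[mu]_x (g2 x)%:E)%E.
Proof.
move=> h0 h12.
have h20 : forall x, (0 <= g2 x)%R by move=> x; exact: le_trans (h12 x).
rewrite !ge0_integralTE; last 2 first.
- by move=> x; rewrite lee_fin.
- by move=> x; rewrite lee_fin.
  apply: ge_ereal_sup => _ [h hle <-]; apply: ereal_sup_ubound; exists h => // x.
  by apply: le_trans (hle x) _; rewrite lee_fin.
Qed.

Lemma Fprim0 {R : realType} (f : R -> R) : Fprim f 0 = 0.
Proof. by rewrite /Fprim lexx set_itv1 Rintegral_set1. Qed.

From mathcomp Require Import lra.

Theorem lemma3p3 (R : realType) (N : nat) (hN : (2 <= N)%N)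
  (mu : {measure set (N.-tuple R) -> \bar R}) (hmu : is_lebesgue_RN mu)
  (f : R -> R) (c1 c2 p : R)
  (f1 : continuous f)
  (f2 : f s @[s --> 0] --> 0)
  (hc1 : 0 < c1) (hc2 : 0 < c2) (hp1 : 1 < p) (hp2 : p < N%:R / (N%:R - 1))
  (f3 : forall s, `|f s| <= c1 + c2 * `|s| `^ (p - 1))
  (f4 : exists2 theta, 1 < theta &
          forall s, s != 0 -> 0 < theta * Fprim f s <= f s * s)
  (f5 : {homo f : x y / x < y})
  (V : 'rV[R]_N -> R) (M0 : R)
  (hVmeas : measurable_fun setT (fun x => V (rowt x)))
  (hV0 : forall x, 0 <= V x) (hM0 : 0 < M0)
  (hVM0 : (mu [set x | (V (rowt x) <= M0)%R] < +oo)%E)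
  (hOmega : interior (V @^-1` [set 0]) !=set0)
  (lam : R) (hlam : 0 < lam)
  (u : nat -> 'rV[R]_N -> R) (tau : nat -> R)
  (huE : forall n, in_E mu V lam (u n))
  (hcfin : c_lam mu V lam f \is a fin_num)
  (hPsi : Psi mu V lam f (u n) @[n --> \oo] --> fine (c_lam mu V lam f))
  (htau : tau n @[n --> \oo] --> 0)
  (hineq : forall n v, in_E mu V lam v ->
     normE mu V lam v - normE mu V lam (u n) >=
       Rintegral mu setT (fun x => f (u n (rowt x)) * (v (rowt x) - u n (rowt x)))
       - tau n * normE mu V lam (v - u n)) :
  exists M : R, forall n, normE mu V lam (u n) <= M.
Proof.
have [th th1 hth] := f4.
set c := fine (c_lam mu V lam f).
have h1V : forall y, 0 <= 1 + lam * V y.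
  by move=> y; have := hV0 y; have := hlam; nra.
have fss : forall s, 0 <= f s * s.
  move=> s; have [->|s0] := eqVneq s 0; first by rewrite mulr0.
  by have /andP[h1 h2] := hth s s0; lra.
have F0 : forall s, 0 <= Fprim f s.
  move=> s; have [->|s0] := eqVneq s 0; first by rewrite Fprim0.
  have /andP[h1 h2] := hth s s0.
  by rewrite -(pmulr_rge0 _ (lt_trans ltr01 th1)) ltW.
have Fle : forall s, Fprim f s <= th^-1 * (f s * s).
  move=> s; have [->|s0] := eqVneq s 0; first by rewrite Fprim0 mulr0 mulr0.
  have /andP[h1 h2] := hth s s0.
  by rewrite ler_pdivlMl ?(lt_trans ltr01 th1).
pose del := Num.min ((th - 1) / 2) (1/2).
have del0 : 0 < del by rewrite lt_min; apply/andP; split; lra.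
have del1 : del <= (th - 1) / 2 by rewrite ge_min lexx.
have del2 : del <= 1/2 by rewrite ge_min lexx orbT.
pose K := 2 * th * (`|c| + 1) / (th - 1).
have key : forall n, c - 1 < Psi mu V lam f (u n) < c + 1 -> -del < tau n < del ->
    normE mu V lam (u n) <= K.
  move=> n /andP[_ hP] /andP[ht1 ht2].
  set a := normE mu V lam (u n).
  have [hi [htv hwl]] := huE n.
  have a0 : 0 <= a := @normE_ge0 R N mu V lam h1V (u n).
  pose g := fun x => f (u n (rowt x)) * u n (rowt x).
  pose I := (\int[mu]_x (g x)%:E)%E.
  have I0 : (0 <= I)%E by apply: integral_ge0 => x _; rewrite lee_fin fss.
  pose A := Rintegral mu setT g.
  pose w := fun y => 2 * u n y.
  have two0 : (0:R) < 2 by [].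
  have hw := hineq n w (@in_E_scaleW R N mu V lam (u n) w 2 two0 (huE n) (fun y => erefl)).
  have ew : w - u n = u n.
    by apply/funext => y; change (w y - u n y = u n y); rewrite /w; lra.
  have eg : (fun x => f (u n (rowt x)) * (w (rowt x) - u n (rowt x))) = g.
    by apply/funext => x; rewrite /g /w; congr (_ * _); lra.
  rewrite ew eg -/A -/a in hw.
  have nw := @normE_scaleW R N mu V lam h1V (u n) w 2 two0 htv hwl (fun y => erefl).
  have h0 := hineq n (fun _ => 0) (@in_E0 R N mu V lam).
  rewrite (@normE0 R N mu V lam h1V) -/a in h0.
  have e0 : (fun x => f (u n (rowt x)) * ((fun _ : 'rV[R]_N => 0) (rowt x) - u n (rowt x))) = (fun x => - g x).
    by apply/funext => x; rewrite /g /= sub0r mulrN.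
  have eA : Rintegral mu setT (fun x => - g x) = - A.
    rewrite /Rintegral /A /Rintegral.
    under eq_integral do rewrite EFinN.
    by rewrite integral_ge0N ?fineN // => x _; rewrite lee_fin fss.
  rewrite e0 eA in h0.
  have nb := @normE_oppW R N mu V lam h1V (u n) ((fun _ => 0) - u n) htv hwl
     (fun y => sub0r (u n y)).
  have nb0 := @normE_ge0 R N mu V lam h1V ((fun _ => 0) - u n).
  set b := normE mu V lam ((fun _ => 0) - u n) in h0 nb nb0.
  set d := normE mu V lam w in hw nw.
  rewrite -/a in nw nb.
  have hA : A <= a + del * a by nra.
  have hA2 : a - del * a <= A.
    have p1 : 0 <= (del - tau n) * b by apply: mulr_ge0; lra.
    have p2 : 0 <= del * (a - b) by apply: mulr_ge0; lra.
    nra.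
  have [Ifin|Inf] := boolP (I \is a fin_num); last first.
    have A0 : A = 0.
      move: Inf; rewrite ge0_fin_numE // -leNgt leye_eq => /eqP Ioo.
      by rewrite /A /Rintegral -/I Ioo.
    rewrite A0 in hA2.
    have : a <= 0 by nra.
    move=> ha; apply: le_trans ha _.
    rewrite /K mulr_ge0 // ?invr_ge0; try lra.
    by rewrite mulr_ge0 //; lra.
  pose Fx := fun x => Fprim f (u n (rowt x)).
  pose J := (\int[mu]_x (Fx x)%:E)%E.
  have J0 : (0 <= J)%E by apply: integral_ge0 => x _; rewrite lee_fin F0.
  have thi0 : 0 < th^-1 by rewrite invr_gt0; lra.
  have JI : (J <= th^-1%:E * I)%E.
    apply: le_trans (@nnint_le R N mu Fx (fun x => th^-1 * g x) _ _) _.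
    - by move=> x; exact: F0.
    - by move=> x; exact: Fle.
    by rewrite nnint_scale // => x; exact: fss.
  have Jfin : J \is a fin_num.
    rewrite ge0_fin_numE //; apply: le_lt_trans JI _.
    by rewrite lte_mul_pinfty // ?lee_fin ?ltW // -ge0_fin_numE.
  have hB : Rintegral mu setT Fx <= th^-1 * A.
    rewrite /Rintegral -/J /A /Rintegral -/I -[th^-1]/(fine th^-1%:E) -fineM //; apply: fine_le => //.
    by rewrite fin_numM.
  have hPs : Psi mu V lam f (u n) = a - Rintegral mu setT Fx by [].
  rewrite hPs in hP.
  set B := Rintegral mu setT Fx in hB hP.
  have thB : th * B <= A.
    by rewrite -(ler_pM2l thi0) mulrA mulVf ?mul1r //; lra.
  have p3 : 0 <= ((th - 1) / 2 - del) * a by apply: mulr_ge0; lra.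
  have hc : c + 1 <= `|c| + 1 by rewrite lerD2r ler_norm.
  have th0 : 0 < th by lra.
  have p4 : th * (c + 1) <= th * (`|c| + 1) by rewrite ler_pM2l.
  have p5 : th * a - th * B < th * (c + 1) by rewrite -mulrBr ltr_pM2l.
  have fin : a * (th - 1) <= 2 * th * (`|c| + 1) by nra.
  rewrite /K ler_pdivlMr; last lra.
  exact: fin.
have := hPsi; move/cvgr_dist_lt => /(_ 1 ltr01) [N0 _ HN0].
have := htau; move/cvgr_dist_lt => /(_ del del0) [N1 _ HN1].
pose N2 := maxn N0 N1.
exists (K + \sum_(i < N2) normE mu V lam (u i)) => n.
have [hn|hn] := ltnP n N2.
  rewrite (bigD1 (Ordinal hn)) //= addrCA ler_wpDr //.
  apply: addr_ge0; last by apply: sumr_ge0 => i _; exact: (@normE_ge0 R N mu V lam h1V).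
  rewrite /K mulr_ge0 // ?invr_ge0; try lra.
  by rewrite mulr_ge0 //; lra.
apply: (@le_trans _ _ K); last first.
  by rewrite lerDl; apply: sumr_ge0 => i _; exact: (@normE_ge0 R N mu V lam h1V).
apply: key.
  have := HN0 n (leq_trans (leq_maxl _ _) hn) => /=.
  by rewrite -/c -ltr_distlC.
have := HN1 n (leq_trans (leq_maxr _ _) hn) => /=.
by rewrite sub0r normrN ltr_norml.
Qed.
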